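(* Let $A$ be an $m \times m$ normal centrosymmetric nonnegative matrix with eigenvalues $\alpha_1, \ldots, \alpha_m$, where $\alpha_1$ is the Perron root of $A$ and there is a unit nonnegative eigenvector $u_1$ of $A$ for $\alpha_1$ with $Ju_1 = u_1$; let $B$ be an $n \times n$ normal centrosymmetric nonnegative matrix with eigenvalues $\beta_1, \ldots, \beta_n$, where $\beta_1$ is the Perron root of $B$ and there is a unit nonnegative eigenvector $v_1$ of $B$ for $\beta_1$ with $Jv_1 = v_1$. Assume $\alpha_1 \geq \beta_1$. If $a, b$ are real numbers with $\alpha_1 - \beta_1 \geq a \geq b$ and $a + b \leq 0$, then there is a normal centrosymmetric nonnegative matrix with eigenvalues $\alpha_1 - (a+b), \beta_1 + a, \beta_1 + b, \alpha_2, \ldots, \alpha_m, \beta_2, \ldots, \beta_n, \beta_2, \ldots, \beta_n$.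
   Context: $J$ denotes the reverse identity matrix (ones on the anti-diagonal, zeros elsewhere) of the appropriate size. A square matrix $Q$ is centrosymmetric if $JQJ = Q$, nonnegative if all entries are nonnegative, and normal if $QQ^* = Q^*Q$. The Perron root of a nonnegative matrix is its spectral radius, which is an eigenvalue. *)

(* Defs.v *)
(* real matrices over an arbitrary real closed field R,
   eigenvalues taken in the algebraic closure R[i] = complex R. *)
From HB Require Import structures.
From mathcomp Require Import all_boot all_order all_algebra.
From mathcomp Require Import complex.
Set Implicit Arguments. Unset Strict Implicit. Unset Printing Implicit Defensive.
Import Order.TTheory GRing.Theory Num.Theory.
Local Open Scope ring_scope.
Local Open Scope complex_scope.

Definition Jmx (R : nzRingType) (n : nat) : 'M[R]_n :=
  \matrix_(i < n, j < n) (j == rev_ord i)%:R.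

Definition centrosymmetric (R : nzRingType) n (A : 'M[R]_n) : Prop :=
  Jmx R n *m A *m Jmx R n = A.

Definition nonneg_mx (R : numDomainType) m n (A : 'M[R]_(m, n)) : Prop :=
  forall i j, 0 <= A i j.

(* for real matrices, A^* = A^T *)
Definition normal_mx (R : nzRingType) n (A : 'M[R]_n) : Prop :=
  A *m A^T = A^T *m A.

Definition cmx (R : rcfType) n (A : 'M[R]_n) : 'M[complex R]_n :=
  map_mx (fun x => x%:C) A.

(* s is the list of eigenvalues of A, with algebraic multiplicities *)
Definition has_spectrum (R : rcfType) n (A : 'M[R]_n) (s : seq (complex R)) : Prop :=
  char_poly (cmx A) = \prod_(z <- s) ('X - z%:P).

(* r is the Perron root (spectral radius, which is an eigenvalue) of A *)
Definition perron_root (R : rcfType) n (A : 'M[R]_n) (r : R) : Prop :=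
  root (char_poly (cmx A)) r%:C /\
  (forall z : complex R, root (char_poly (cmx A)) z -> `|z| <= r%:C).

(* Main.v *)
From HB Require Import structures.
From mathcomp Require Import all_boot all_order all_algebra.
From mathcomp Require Import complex zify ring.
Require Import Defs.
Set Implicit Arguments. Unset Strict Implicit. Unset Printing Implicit Defensive.
Import Order.TTheory GRing.Theory Num.Theory.
Local Open Scope ring_scope.

Lemma JmxT (R : nzRingType) n : (Jmx R n)^T = Jmx R n.
Proof.
apply/matrixP => i j; rewrite !mxE.
have -> : (i == rev_ord j) = (j == rev_ord i) by apply/eqP/eqP => ->; rewrite rev_ordK.
by [].
Qed.

Lemma mulJmxE (R : nzRingType) n p (M : 'M[R]_(n, p)) i j :
  (Jmx R n *m M) i j = M (rev_ord i) j.
Proof.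
rewrite mxE (bigD1 (rev_ord i)) //= mxE eqxx mul1r big1 ?addr0 // => k /negbTE.
by rewrite mxE => ->; rewrite mul0r.
Qed.

Lemma mulmxJE (R : nzRingType) n p (M : 'M[R]_(p, n)) i j :
  (M *m Jmx R n) i j = M i (rev_ord j).
Proof.
rewrite mxE (bigD1 (rev_ord j)) //= mxE rev_ordK eqxx mulr1 big1 ?addr0 // => k.
move=> ne; rewrite mxE.
have -> : (j == rev_ord k) = false.
  by apply/negbTE; apply: contra ne => /eqP ->; rewrite rev_ordK.
by rewrite mulr0.
Qed.

Lemma centroP (R : nzRingType) n (M : 'M[R]_n) :
  centrosymmetric M <-> forall i j, M (rev_ord i) (rev_ord j) = M i j.
Proof.
split => [H i j | H].
  by rewrite -{2}H mulmxJE mulJmxE.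
by apply/matrixP => i j; rewrite mulmxJE mulJmxE H.
Qed.

Variant pos3_spec m n (i : 'I_(n + m + n)) : Type :=
  | Pos1 (a : 'I_n) of i = lshift n (lshift m a)
  | Pos2 (b : 'I_m) of i = lshift n (rshift n b)
  | Pos3 (c : 'I_n) of i = rshift (n + m) c.

Lemma pos3P m n (i : 'I_(n + m + n)) : pos3_spec i.
Proof.
case: (split_ordP i) => [j -> | c ->]; last exact: Pos3.
by case: (split_ordP j) => [a -> | b ->]; [apply: Pos1 | apply: Pos2].
Qed.

Lemma rev1 m n (a : 'I_n) :
  rev_ord (lshift n (lshift m a) : 'I_(n + m + n)) = rshift (n + m) (rev_ord a).
Proof. apply/val_inj => /=; have := ltn_ord a; lia. Qed.

Lemma rev2 m n (b : 'I_m) :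
  rev_ord (lshift n (rshift n b) : 'I_(n + m + n)) = lshift n (rshift n (rev_ord b)).
Proof. apply/val_inj => /=; have := ltn_ord b; lia. Qed.

Lemma rev3 m n (c : 'I_n) :
  rev_ord (rshift (n + m) c : 'I_(n + m + n)) = lshift n (lshift m (rev_ord c)).
Proof. apply/val_inj => /=; have := ltn_ord c; lia. Qed.
Lemma sylvester (R : comNzRingType) p k (A : 'M[R]_(p, k)) (B : 'M[R]_(k, p)) :
  \det (1%:M + A *m B) = \det (1%:M + B *m A).
Proof.
pose M := block_mx 1%:M (- A) B 1%:M.
have e1 : block_mx 1%:M 0 (- B) 1%:M *m M = block_mx 1%:M (- A) 0 (1%:M + B *m A).
  rewrite /M mulmx_block !(mul1mx, mulmx1, mul0mx, mulmx0, addr0, add0r, mulNmx, mulmxN, opprK, addNr, addrN).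
  by rewrite addrC.
have e2 : M *m block_mx 1%:M 0 (- B) 1%:M = block_mx (1%:M + A *m B) (- A) 0 1%:M.
  by rewrite /M mulmx_block !(mul1mx, mulmx1, mul0mx, mulmx0, addr0, add0r, mulNmx, mulmxN, opprK, addNr, addrN).
have d1 : \det (block_mx (1%:M : 'M[R]_p) 0 (- B) 1%:M) = 1.
  by rewrite det_lblock !det1 mulr1.
have h1 := congr1 determinant e1; have h2 := congr1 determinant e2.
rewrite !det_mulmx d1 !det_ublock !det1 mul1r !mulr1 in h1 h2.
by rewrite -h1 -h2 mul1r.
Qed.

Lemma char_poly_update (F : fieldType) p k (D : 'M[F]_p) (X : 'M[F]_(p, k))
  (L N : 'M[F]_k) :
  X^T *m X = 1%:M -> D *m X = X *m L ->
  char_poly (D + X *m N *m X^T) * char_poly L = char_poly D * char_poly (L + N).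
Proof.
move=> XX DX.
pose f := @polyC F.
pose E := char_poly_mx D; pose Xp := map_mx f X; pose Np := map_mx f N.
pose Fp := char_poly_mx L; pose Q := char_poly_mx (L + N).
pose h := \det Q.
have XXp : Xp^T *m Xp = 1%:M by rewrite /Xp map_trmx -map_mxM XX map_mx1.
have EX : E *m Xp = Xp *m Fp.
  rewrite /E /Fp /char_poly_mx mulmxBl mulmxBr mul_scalar_mx mul_mx_scalar.
  by rewrite /Xp -!map_mxM DX.
have QE : Q = Fp - Np by rewrite /Q /Fp /char_poly_mx map_mxD opprD addrA.
have CE : char_poly_mx (D + X *m N *m X^T) = E - Xp *m Np *m Xp^T.
  by rewrite /char_poly_mx map_mxD !map_mxM -map_trmx opprD addrA.
have CX : (E - Xp *m Np *m Xp^T) *m Xp = Xp *m Q.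
  by rewrite mulmxBl EX -!mulmxA XXp mulmx1 QE -mulmxBr.
pose G := \adj Q *m Fp.
have e1 : (E - Xp *m Np *m Xp^T) *m (1%:M + Xp *m ((G - 1%:M) *m Xp^T))
   = E + Xp *m (h *: Fp - Fp) *m Xp^T.
  have QG : Q *m (G - 1%:M) = h *: Fp - Q.
    by rewrite mulmxBr mulmx1 /G mulmxA mul_mx_adj mul_scalar_mx.
  rewrite mulmxDr mulmx1 mulmxA CX.
  rewrite [Xp *m Q *m _]mulmxA -[Xp *m Q *m _](mulmxA Xp) QG.
  rewrite -addrA; congr (_ + _).
  rewrite -mulNmx -mulmxN -mulmxDl -mulmxDr; congr (_ *m _ *m _).
  by rewrite QE opprB addrCA addKr.
have e2 : E *m (1%:M + Xp *m (((scalar_mx h) - 1%:M) *m Xp^T))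
   = E + Xp *m (h *: Fp - Fp) *m Xp^T.
  by rewrite mulmxDr mulmx1 !mulmxA EX -(mulmxA Xp Fp) mulmxBr mulmx1 mul_mx_scalar.
have d1 : \det (1%:M + Xp *m ((G - 1%:M) *m Xp^T)) = \det G.
  by rewrite sylvester -mulmxA XXp mulmx1 addrC subrK.
have d2 : \det (1%:M + Xp *m (((scalar_mx h) - 1%:M) *m Xp^T)) = h ^+ k.
  by rewrite sylvester -mulmxA XXp mulmx1 addrC subrK det_scalar.
have dadj : h * \det (\adj Q) = h ^+ k by rewrite -det_mulmx mul_mx_adj det_scalar.
have := congr1 determinant (etrans e1 (esym e2)).
rewrite !det_mulmx d1 d2 /G det_mulmx -CE -/(char_poly _) => H.
have hn0 : h ^+ k != 0.
  by rewrite expf_neq0 // monic_neq0 // char_poly_monic.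
apply: (mulIf hn0).
rewrite -{1}dadj.
have -> : char_poly (D + X *m N *m X^T) * char_poly L * (h * \det (\adj Q))
  = h * (char_poly (D + X *m N *m X^T) * (\det (\adj Q) * \det Fp)).
  by rewrite /Fp -/(char_poly L); ring.
by rewrite H /E -/(char_poly D) /h /Q -/(char_poly (L + N)); ring.
Qed.
Definition o3_0 : 'I_3 := @Ordinal 3 0 isT.
Definition o3_1 : 'I_3 := @Ordinal 3 1 isT.
Definition o3_2 : 'I_3 := @Ordinal 3 2 isT.

Lemma det2 (R : comNzRingType) (G : 'M[R]_2) :
  \det G = G 0 0 * G 1 1 - G 0 1 * G 1 0.
Proof.
rewrite (expand_det_row _ 0) !big_ord_recr big_ord0 /= add0r.
rewrite /cofactor !det_mx11 !mxE /=.
pose g (i j : nat) := G (inord i) (inord j).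
have E i j : G i j = g i j by rewrite /g !inord_val.
rewrite !E /=; ring.
Qed.

Lemma det3 (R : comNzRingType) (G : 'M[R]_3) :
  \det G = G o3_0 o3_0 * (G o3_1 o3_1 * G o3_2 o3_2 - G o3_1 o3_2 * G o3_2 o3_1)
          - G o3_0 o3_1 * (G o3_1 o3_0 * G o3_2 o3_2 - G o3_1 o3_2 * G o3_2 o3_0)
          + G o3_0 o3_2 * (G o3_1 o3_0 * G o3_2 o3_1 - G o3_1 o3_1 * G o3_2 o3_0).
Proof.
rewrite (expand_det_row _ 0) !big_ord_recr big_ord0 /= add0r.
rewrite /cofactor !det2 !mxE /=.
pose g (i j : nat) := G (inord i) (inord j).
have E i j : G i j = g i j by rewrite /g !inord_val.
rewrite !E /=; ring.
Qed.

Definition M3 (R : nzRingType) (bb aa x y : R) : 'M[R]_3 :=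
  \matrix_(i, j) if (i == j :> nat) then (if (i == 1%N :> nat) then aa else bb)
                 else if (i + j == 2)%N then y else x.

Lemma char3 (F : comNzRingType) (bb aa x y : F) :
  char_poly (M3 bb aa x y) =
  ('X - (bb - y)%:P) * (('X - (bb + y)%:P) * ('X - aa%:P) - (x * x *+ 2)%:P).
Proof.
rewrite /char_poly /char_poly_mx det3 !mxE /= mulr1n mulr0n.
rewrite !(rmorphB, rmorphD, rmorphMn, rmorphM) /=; ring.
Qed.

Definition Dmx (R : nzRingType) m n (A : 'M[R]_m) (B : 'M[R]_n) : 'M[R]_(n + m + n) :=
  block_mx (block_mx B 0 0 A) 0 0 B.

Definition Xmx (R : nzRingType) m n (u : 'cV[R]_m) (v : 'cV[R]_n) : 'M[R]_(n + m + n, 3) :=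
  col_mx (col_mx (v *m delta_mx 0 o3_0) (u *m delta_mx 0 o3_1)) (v *m delta_mx 0 o3_2).

Lemma sum_delta3 (R : nzRingType) :
  delta_mx o3_0 o3_0 + delta_mx o3_1 o3_1 + delta_mx o3_2 o3_2 = 1%:M :> 'M[R]_3.
Proof.
apply/matrixP => i j; rewrite !mxE.
by case: i => [[|[|[|?]]] ?]; case: j => [[|[|[|?]]] ?] //=; rewrite ?addr0 ?add0r.
Qed.

Lemma XtX (R : comNzRingType) m n (u : 'cV[R]_m) (v : 'cV[R]_n) :
  u^T *m u = 1%:M -> v^T *m v = 1%:M -> (Xmx u v)^T *m Xmx u v = 1%:M.
Proof.
move=> hu hv.
rewrite /Xmx !tr_col_mx !mul_row_col !trmx_mul !trmx_delta.
rewrite -!mulmxA !(mulmxA v^T) !(mulmxA u^T) hu hv !mul1mx !mul_delta_mx.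
exact: sum_delta3.
Qed.

Lemma deltaM3 (R : nzRingType) (bb aa : R) (k : 'I_3) :
  (delta_mx 0 k : 'rV[R]_3) *m M3 bb aa 0 0 = (if k == o3_1 then aa else bb) *: delta_mx 0 k.
Proof.
rewrite -rowE; apply/matrixP => i j; rewrite (ord1 i) !mxE eqxx /=.
by case: k => [[|[|[|?]]] ?]; case: j => [[|[|[|?]]] ?];
  rewrite -?val_eqE /= ?mulr1 ?mulr0.
Qed.

Lemma DX (R : comNzRingType) m n (A : 'M[R]_m) (B : 'M[R]_n) u v (al be : R) :
  A *m u = al *: u -> B *m v = be *: v ->
  Dmx A B *m Xmx u v = Xmx u v *m M3 be al 0 0.
Proof.
move=> hA hB.
rewrite /Dmx /Xmx !mul_block_col !mul_col_mx !mul0mx !addr0 !add0r.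
by rewrite -!mulmxA !deltaM3 !mulmxA hA hB /= -!scalemxAl -!scalemxAr.
Qed.

Lemma Dmx_tr (R : nzRingType) m n (A : 'M[R]_m) (B : 'M[R]_n) :
  (Dmx A B)^T = Dmx A^T B^T.
Proof. by rewrite /Dmx !tr_block_mx !trmx0. Qed.

Lemma Dmx_normal (R : comNzRingType) m n (A : 'M[R]_m) (B : 'M[R]_n) :
  normal_mx A -> normal_mx B -> normal_mx (Dmx A B).
Proof.
rewrite /normal_mx Dmx_tr /Dmx => hA hB.
by rewrite !mulmx_block !mulmx0 !mul0mx !addr0 !add0r hA hB.
Qed.

Lemma M3_tr (R : nzRingType) (bb aa x y : R) : (M3 bb aa x y)^T = M3 bb aa x y.
Proof.
apply/matrixP => i j; rewrite !mxE eq_sym addnC.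
by case: eqP => // ->.
Qed.

Lemma normal_update (R : comNzRingType) p k (D : 'M[R]_p) (X : 'M[R]_(p, k))
  (L N : 'M[R]_k) :
  X^T *m X = 1%:M -> D *m X = X *m L -> D^T *m X = X *m L -> L^T = L -> N^T = N ->
  normal_mx D -> normal_mx (D + X *m N *m X^T).
Proof.
move=> XX DX DtX hL hN hD.
have XtD : X^T *m D = L *m X^T.
  by apply: trmx_inj; rewrite !trmx_mul trmxK DtX hL.
have XtDt : X^T *m D^T = L *m X^T.
  by apply: trmx_inj; rewrite !trmx_mul !trmxK DX hL.
have CT : (D + X *m N *m X^T)^T = D^T + X *m N *m X^T.
  by rewrite linearD /= !trmx_mul trmxK hN mulmxA.
rewrite /normal_mx CT !mulmxDl !mulmxDr.
have DY : D *m (X *m N *m X^T) = X *m (L *m N) *m X^T by rewrite !mulmxA DX.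
have DtY : D^T *m (X *m N *m X^T) = X *m (L *m N) *m X^T by rewrite !mulmxA DtX.
have YDt : X *m N *m X^T *m D^T = X *m (N *m L) *m X^T.
  by rewrite -mulmxA XtDt !mulmxA.
have YD : X *m N *m X^T *m D = X *m (N *m L) *m X^T.
  by rewrite -mulmxA XtD !mulmxA.
by rewrite DY DtY YDt YD hD.
Qed.

Lemma centro_update (R : comNzRingType) p k (D : 'M[R]_p) (X : 'M[R]_(p, k))
  (N : 'M[R]_k) :
  centrosymmetric D -> Jmx R p *m X = X *m Jmx R k -> centrosymmetric N ->
  centrosymmetric (D + X *m N *m X^T).
Proof.
rewrite /centrosymmetric => hD JX hN.
have XtJ : X^T *m Jmx R p = Jmx R k *m X^T.
  by apply: trmx_inj; rewrite !trmx_mul trmxK !JmxT.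
rewrite mulmxDr mulmxDl hD; congr (_ + _).
rewrite !mulmxA JX -(mulmxA _ X^T) XtJ.
have -> : X *m Jmx R k *m N *m (Jmx R k *m X^T) = X *m (Jmx R k *m N *m Jmx R k) *m X^T.
  by rewrite !mulmxA.
by rewrite hN.
Qed.

Lemma Dmx_centro (R : nzRingType) m n (A : 'M[R]_m) (B : 'M[R]_n) :
  centrosymmetric A -> centrosymmetric B -> centrosymmetric (Dmx A B).
Proof.
move=> /centroP hA /centroP hB; apply/centroP => i j.
by case: (pos3P i) => [a|b|c] ->; case: (pos3P j) => [a'|b'|c'] ->;
  rewrite ?rev1 ?rev2 ?rev3 /Dmx ?block_mxEul ?block_mxEur ?block_mxEdl ?block_mxEdr
    ?mxE ?hA ?hB.
Qed.

Lemma Xmx_entry (R : nzRingType) p (v : 'cV[R]_p) (o : 'I_3) a k :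
  (v *m delta_mx 0 o) a k = v a 0 * (k == o)%:R.
Proof. by rewrite mxE big_ord1 mxE eqxx. Qed.

Lemma JX (R : nzRingType) m n (u : 'cV[R]_m) (v : 'cV[R]_n) :
  Jmx R m *m u = u -> Jmx R n *m v = v ->
  Jmx R (n + m + n) *m Xmx u v = Xmx u v *m Jmx R 3.
Proof.
move=> hu hv.
have hu' a : u (rev_ord a) 0 = u a 0 by rewrite -mulJmxE hu.
have hv' a : v (rev_ord a) 0 = v a 0 by rewrite -mulJmxE hv.
apply/matrixP => i k; rewrite mulJmxE mulmxJE.
case: (pos3P i) => [a|b|c] ->; rewrite ?rev1 ?rev2 ?rev3 /Xmx
  ?col_mxEu ?col_mxEd ?Xmx_entry ?hu' ?hv';
  by case: k => [[|[|[|?]]] ?]; rewrite -?val_eqE.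
Qed.

Lemma M3_centro (R : nzRingType) (bb aa x y : R) : centrosymmetric (M3 bb aa x y).
Proof.
apply/centroP => i j; rewrite !mxE.
by case: i => [[|[|[|?]]] ?]; case: j => [[|[|[|?]]] ?].
Qed.

Lemma nonneg_add (R : numDomainType) m n (A B : 'M[R]_(m, n)) :
  nonneg_mx A -> nonneg_mx B -> nonneg_mx (A + B).
Proof. by move=> hA hB i j; rewrite mxE addr_ge0. Qed.

Lemma nonneg_mul (R : numDomainType) m n p (A : 'M[R]_(m, n)) (B : 'M[R]_(n, p)) :
  nonneg_mx A -> nonneg_mx B -> nonneg_mx (A *m B).
Proof. by move=> hA hB i j; rewrite mxE sumr_ge0 // => k _; rewrite mulr_ge0. Qed.

Lemma nonneg_tr (R : numDomainType) m n (A : 'M[R]_(m, n)) :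
  nonneg_mx A -> nonneg_mx A^T.
Proof. by move=> hA i j; rewrite mxE. Qed.

Lemma nonneg0 (R : numDomainType) m n : nonneg_mx (0 : 'M[R]_(m, n)).
Proof. by move=> i j; rewrite mxE. Qed.

Lemma nonneg_delta (R : numDomainType) m n i0 j0 : nonneg_mx (delta_mx i0 j0 : 'M[R]_(m, n)).
Proof. by move=> i j; rewrite mxE ler0n. Qed.

Lemma nonneg_row (R : numDomainType) m n1 n2 (A : 'M[R]_(m, n1)) (B : 'M[R]_(m, n2)) :
  nonneg_mx A -> nonneg_mx B -> nonneg_mx (row_mx A B).
Proof.
move=> hA hB i j; case: (split_ordP j) => k ->; by rewrite ?row_mxEl ?row_mxEr.
Qed.

Lemma nonneg_col (R : numDomainType) m1 m2 n (A : 'M[R]_(m1, n)) (B : 'M[R]_(m2, n)) :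
  nonneg_mx A -> nonneg_mx B -> nonneg_mx (col_mx A B).
Proof.
move=> hA hB i j; case: (split_ordP i) => k ->; by rewrite ?col_mxEu ?col_mxEd.
Qed.

Lemma nonneg_block (R : numDomainType) m1 m2 n1 n2 (A : 'M[R]_(m1, n1))
  (B : 'M[R]_(m1, n2)) (C : 'M[R]_(m2, n1)) (D : 'M[R]_(m2, n2)) :
  nonneg_mx A -> nonneg_mx B -> nonneg_mx C -> nonneg_mx D ->
  nonneg_mx (block_mx A B C D).
Proof.
by move=> *; rewrite block_mxEv; apply: nonneg_col; apply: nonneg_row.
Qed.

Lemma cV_norm0 (R : realFieldType) k (w : 'cV[R]_k) : w^T *m w = 0 -> w = 0.
Proof.
move=> ww; apply/matrixP => i j; rewrite (ord1 j) [RHS]mxE.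
have := congr1 (fun M : 'M[R]_1 => M 0 0) ww; rewrite /= !mxE => hs.
have H := @psumr_eq0P _ _ predT (fun i => w i 0 ^+ 2) (fun i _ => sqr_ge0 _).
have hsum : \sum_(i | predT i) w i 0 ^+ 2 = 0.
  by rewrite -[RHS]hs; apply: eq_bigr => l _; rewrite mxE expr2.
have := H hsum i isT => {}H.
by apply/eqP; rewrite -sqrf_eq0 H.
Qed.

Lemma normal_eig_tr (R : realFieldType) k (A : 'M[R]_k) (u : 'cV[R]_k) c :
  normal_mx A -> A *m u = c *: u -> A^T *m u = c *: u.
Proof.
move=> hN hA.
pose w := A^T *m u - c *: u.
have uA : u^T *m A^T = c *: u^T by rewrite -trmx_mul hA linearZ.
have uAu : u^T *m A *m u = c *: (u^T *m u) by rewrite -mulmxA hA scalemxAr.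
have uAtu : u^T *m A^T *m u = c *: (u^T *m u) by rewrite uA -scalemxAl.
have uAAu : u^T *m A *m (A^T *m u) = (c * c) *: (u^T *m u).
  rewrite mulmxA -(mulmxA u^T A A^T) hN mulmxA uA -mulmxA hA.
  by rewrite -scalemxAl -scalemxAr scalerA.
have wT : w^T = u^T *m A - c *: u^T by rewrite /w linearB /= linearZ /= trmx_mul trmxK.
have ww : w^T *m w = 0.
  rewrite wT /w mulmxBl !mulmxBr uAAu -!scalemxAl -!scalemxAr uAu.
  rewrite (mulmxA u^T) uAtu !scalerA.
  by rewrite !subrr.
have w0 : w = 0 by apply: cV_norm0.
by apply/eqP; rewrite -subr_eq0 -/w w0.
Qed.

Local Open Scope complex_scope.

Lemma char_Dmx (R : rcfType) m n (A : 'M[R]_m) (B : 'M[R]_n) :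
  char_poly (cmx (Dmx A B)) = char_poly (cmx B) * char_poly (cmx A) * char_poly (cmx B).
Proof.
by rewrite /cmx /Dmx !map_block_mx !map_mx0 /char_poly !char_block_diag_mx !det_ublock.
Qed.

Lemma cmx_M3 (R : rcfType) (bb aa x y : R) :
  cmx (M3 bb aa x y) = M3 bb%:C aa%:C x%:C y%:C.
Proof. by apply/matrixP => i j; rewrite !mxE; case: ifP; case: ifP. Qed.

Lemma cast_props (R : rcfType) p q (e : p = q) (M : 'M[R]_p) s :
  normal_mx M -> centrosymmetric M -> nonneg_mx M -> has_spectrum M s ->
  [/\ normal_mx (castmx (e, e) M), centrosymmetric (castmx (e, e) M),
      nonneg_mx (castmx (e, e) M) & has_spectrum (castmx (e, e) M) s].
Proof. by case: q / e; rewrite castmx_id. Qed.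

Lemma char_update_C (R : rcfType) p (D : 'M[R]_p) (X : 'M[R]_(p, 3)) (L N : 'M[R]_3) :
  X^T *m X = 1%:M -> D *m X = X *m L ->
  char_poly (cmx (D + X *m N *m X^T)) * char_poly (cmx L) =
  char_poly (cmx D) * char_poly (cmx (L + N)).
Proof.
move=> XX DX.
pose f := real_complex R.
have -> : cmx (D + X *m N *m X^T) = cmx D + map_mx f X *m cmx N *m (map_mx f X)^T.
  by rewrite /cmx map_mxD !map_mxM map_trmx.
have -> : cmx (L + N) = cmx L + cmx N by rewrite /cmx map_mxD.
apply: char_poly_update.
  by rewrite map_trmx -map_mxM XX map_mx1.
by rewrite /cmx -!map_mxM DX.
Qed.

From mathcomp Require Import lra.

Theorem corollary3p6 (R : rcfType) (m n : nat)
  (A : 'M[R]_m) (alpha1 : R) (alphas : seq (complex R)) (u1 : 'cV[R]_m)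
  (B : 'M[R]_n) (beta1 : R) (betas : seq (complex R)) (v1 : 'cV[R]_n)
  (a b : R) :
  normal_mx A -> centrosymmetric A -> nonneg_mx A ->
  has_spectrum A (alpha1%:C :: alphas) -> perron_root A alpha1 ->
  A *m u1 = alpha1 *: u1 -> nonneg_mx u1 -> \sum_i u1 i 0 ^+ 2 = 1 ->
  Jmx R m *m u1 = u1 ->
  normal_mx B -> centrosymmetric B -> nonneg_mx B ->
  has_spectrum B (beta1%:C :: betas) -> perron_root B beta1 ->
  B *m v1 = beta1 *: v1 -> nonneg_mx v1 -> \sum_i v1 i 0 ^+ 2 = 1 ->
  Jmx R n *m v1 = v1 ->
  beta1 <= alpha1 ->
  a <= alpha1 - beta1 -> b <= a -> a + b <= 0 ->
  exists C : 'M[R]_(m + n + n),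
    [/\ normal_mx C, centrosymmetric C, nonneg_mx C &
      has_spectrum C
        ([:: (alpha1 - (a + b))%:C; (beta1 + a)%:C; (beta1 + b)%:C]
           ++ alphas ++ betas ++ betas)].
Proof.
move=> nA cA gA sA pA Au u0 usq Ju nB cB gB sB pB Bv v0 vsq Jv hba hab hba' hab0.
have AtU := normal_eig_tr nA Au.
have BtV := normal_eig_tr nB Bv.
have uu : u1^T *m u1 = 1%:M.
  apply/matrixP => i j; rewrite (ord1 i) (ord1 j) !mxE /= -usq.
  by apply: eq_bigr => k _; rewrite mxE expr2.
have vv : v1^T *m v1 = 1%:M.
  apply/matrixP => i j; rewrite (ord1 i) (ord1 j) !mxE /= -vsq.
  by apply: eq_bigr => k _; rewrite mxE expr2.
pose s := (a + b) * (a + beta1 - alpha1) / 2.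
have s0 : 0 <= s.
  rewrite /s divr_ge0 // mulr_le0 //; lra.
pose x := Num.sqrt s; pose y := - b.
have x0 : 0 <= x by apply: sqrtr_ge0.
have y0 : 0 <= y by rewrite /y; lra.
have xx : x * x *+ 2 = (a + b) * (a + beta1 - alpha1).
  by rewrite -expr2 sqr_sqrtr // /s -mulr_natr divfK // pnatr_eq0.
pose L0 := M3 beta1 alpha1 0 0; pose N0 := M3 0 0 x y.
pose D0 := Dmx A B; pose X0 := Xmx u1 v1.
have XX : X0^T *m X0 = 1%:M by apply: XtX.
have DX0 : D0 *m X0 = X0 *m L0 by apply: DX.
have DtX0 : D0^T *m X0 = X0 *m L0 by rewrite /D0 Dmx_tr; apply: DX.
have e : (n + m + n = m + n + n)%N by rewrite [(n + m)%N]addnC.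
have [] // := cast_props e (s := [:: (alpha1 - (a + b))%:C; (beta1 + a)%:C; (beta1 + b)%:C]
           ++ alphas ++ betas ++ betas) (M := D0 + X0 *m N0 *m X0^T).
- apply: (normal_update (L := L0)) => //; try exact: M3_tr.
  exact: Dmx_normal.
- apply: centro_update; [exact: Dmx_centro | exact: JX | exact: M3_centro].
- apply: nonneg_add.
    by apply: nonneg_block; [apply: nonneg_block| | |]; rewrite // ; apply: nonneg0.
  apply: nonneg_mul; first apply: nonneg_mul.
  + by apply: nonneg_col; [apply: nonneg_col|]; apply: nonneg_mul => //; apply: nonneg_delta.
  + by move=> i j; rewrite !mxE; do 2 case: ifP.
  + by apply: nonneg_tr; apply: nonneg_col; [apply: nonneg_col|]; apply: nonneg_mul => //; apply: nonneg_delta.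
- rewrite /has_spectrum.
  have H := char_update_C N0 XX DX0.
  have LN : L0 + N0 = M3 beta1 alpha1 x y.
    by apply/matrixP => i j; rewrite !mxE; do 2 case: ifP; rewrite ?addr0 ?add0r.
  have hL : char_poly (cmx L0) != 0 by rewrite monic_neq0 // char_poly_monic.
  apply: (mulIf hL); rewrite H LN /D0 char_Dmx /L0 !cmx_M3 !char3.
  move: sA sB; rewrite /has_spectrum => hA hB.
  rewrite big_cons in hA; rewrite big_cons in hB; rewrite hA hB.
  rewrite /= !big_cons !big_cat /=.
  have -> : x%:C * x%:C *+ 2 = ((a + b) * (a + beta1 - alpha1))%:C.
    by rewrite -xx -!rmorphM rmorphMn.
  rewrite /y !(rmorphB, rmorphD, rmorphN, rmorphM, rmorph0, rmorphMn) /=.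
  ring.
move=> h1 h2 h3 h4.
by exists (castmx (e, e) (D0 + X0 *m N0 *m X0^T)); split.
Qed.
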